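(* For every prime number $p$ there is an equivariant definable set $X$ in $\mathbf{ZFA}(\mathcal{G}_{\mathcal{F}_p})$ such that the vector space $\mathcal{F}_p^X$ does not have a basis (in $\mathbf{ZFA}(\mathcal{G}_{\mathcal{F}_p})$).
   Context: Let $\mathcal{F}_p$ be the field with $p$ elements. Let $V$ and $V^*$ be two disjoint $\aleph_0$-dimensional vector spaces over $\mathcal{F}_p$ and $\Phi:V\times V^*\to\mathcal{F}_p$ a bilinear map satisfying the Space Extension Axiom: for every finite linearly independent sequence $v_1,\dots,v_k$ in $V$ (resp. $V^*$), scalars $r_1,\dots,r_k\in\mathcal{F}_p$, and finite set $W\subseteq V^*$ (resp. $W\subseteq V$), there is $w\notin W$ with $\Phi(v_i,w)=r_i$ (resp. $\Phi(w,v_i)=r_i$) for all $i$. The polar geometry is the structure $\mathcal{G}_{\mathcal{F}_p}=\langle V\cup V^*,B,\Phi,+,(-)r\ (r\in\mathcal{F}_p)\rangle$, where $+$ and scalar multiplication are interpreted separately on $V$ and $V^*$ and the unary predicate $B$ holds exactly on $V$. $\mathbf{ZFA}(\mathcal{G}_{\mathcal{F}_p})$ is the permutation model with atoms $V\cup V^*$ consisting of hereditarily finitely supported sets (supported by finite $A_0$ = fixed by all automorphisms of the structure fixing $A_0$ pointwise). A set is equivariant if fixed by all automorphisms, and an equivariant set is definable if it has finitely many orbits. $\mathcal{F}_p^X$ is the vector space of finitely supported functions $X\to\mathcal{F}_p$, and a basis must be a finitely supported set. *)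

(* Defs.v *)
From HB Require Import structures.
From Stdlib Require List.
From mathcomp Require Import all_boot all_algebra.
Set Implicit Arguments. Unset Strict Implicit. Unset Printing Implicit Defensive.
Import GRing.Theory.
Local Open Scope ring_scope.

Section Polar.
Variable F : fieldType.
Variables (V Vs : lmodType F).

Definition aleph0_basis (W : lmodType F) (e : nat -> W) : Prop :=
  (forall (n : nat) (c : 'I_n -> F),
      \sum_(i < n) c i *: e i = 0 -> forall i, c i = 0) /\
  (forall w : W, exists (n : nat) (c : 'I_n -> F), w = \sum_(i < n) c i *: e i).

Definition aleph0_dim (W : lmodType F) : Prop := exists e : nat -> W, aleph0_basis e.

Definition bilinear_form (Phi : V -> Vs -> F) : Prop :=
  (forall a v1 v2 w, Phi (a *: v1 + v2) w = a * Phi v1 w + Phi v2 w) /\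
  (forall a v w1 w2, Phi v (a *: w1 + w2) = a * Phi v w1 + Phi v w2).

Definition lin_indep_fin (W : lmodType F) (k : nat) (v : 'I_k -> W) : Prop :=
  forall c : 'I_k -> F, \sum_(i < k) c i *: v i = 0 -> forall i, c i = 0.

Definition space_extension_axiom (Phi : V -> Vs -> F) : Prop :=
  (forall (k : nat) (v : 'I_k -> V) (r : 'I_k -> F) (W : seq Vs),
      lin_indep_fin v -> exists w : Vs, w \notin W /\ forall i, Phi (v i) w = r i) /\
  (forall (k : nat) (v : 'I_k -> Vs) (r : 'I_k -> F) (W : seq V),
      lin_indep_fin v -> exists w : V, w \notin W /\ forall i, Phi w (v i) = r i).

(* Automorphisms of <V u V*, B, Phi, +, (-)r>: since B (= V) is preserved,
   an automorphism is a pair of bijections of V and of V*, preserving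
   + and scalar multiplication on each sort, and preserving Phi. *)
Definition is_aut (Phi : V -> Vs -> F) (s : V -> V) (t : Vs -> Vs) : Prop :=
  [/\ bijective s, bijective t,
      (forall x y, s (x + y) = s x + s y) /\ (forall (a : F) x, s (a *: x) = a *: s x),
      (forall x y, t (x + y) = t x + t y) /\ (forall (a : F) x, t (a *: x) = a *: t x)
    & forall v w, Phi (s v) (t w) = Phi v w].

Definition atom := (V + Vs)%type.

Definition amap (s : V -> V) (t : Vs -> Vs) (a : atom) : atom :=
  match a with inl v => inl (s v) | inr w => inr (t w) end.

End Polar.

(* The cumulative hierarchy over a type of atoms (Aczel-style ZFA).    *)

Inductive zfa (A : Type) : Type :=
| Atm : A -> zfa A
| Cls : forall Ix : Type, (Ix -> zfa A) -> zfa A.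
Arguments Atm {A}.
Arguments Cls {A Ix}.

Fixpoint zeq (A : Type) (x y : zfa A) {struct x} : Prop :=
  match x, y with
  | Atm a, Atm b => a = b
  | @Cls _ Ix f, @Cls _ Jx g =>
      (forall i, exists j, zeq (f i) (g j)) /\ (forall j, exists i, zeq (f i) (g j))
  | _, _ => False
  end.

Definition zin (A : Type) (y x : zfa A) : Prop :=
  match x with
  | Atm _ => False
  | @Cls _ Ix f => exists i, zeq y (f i)
  end.

Definition is_set (A : Type) (x : zfa A) : Prop :=
  match x with Atm _ => False | @Cls _ _ _ => True end.

Fixpoint zact (A : Type) (pi : A -> A) (x : zfa A) : zfa A :=
  match x with
  | Atm a => Atm (pi a)
  | @Cls _ Ix f => Cls (fun i => zact pi (f i))
  end.

Section Model.
Variable F : fieldType.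
Variables (V Vs : lmodType F).
Variable Phi : V -> Vs -> F.

Notation atom := (atom V Vs).
Notation Z := (zfa atom).

Definition fixes (s : V -> V) (t : Vs -> Vs) (A0 : list atom) : Prop :=
  forall a, List.In a A0 -> amap s t a = a.

Definition supports (A0 : list atom) (x : Z) : Prop :=
  forall s t, is_aut Phi s t -> fixes s t A0 -> zeq (zact (amap s t) x) x.

Definition fin_supp (x : Z) : Prop := exists A0 : list atom, supports A0 x.

(* hereditarily finitely supported = element of ZFA(G_F) *)
Fixpoint in_model (x : Z) : Prop :=
  match x with
  | Atm _ => True
  | @Cls _ Ix f => fin_supp (Cls f) /\ forall i, in_model (f i)
  end.

Definition equivariant (x : Z) : Prop := supports [::] x.

Definition definable (X : Z) : Prop :=
  equivariant X /\
  exists (n : nat) (ys : 'I_n -> Z),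
    (forall k, zin (ys k) X) /\
    forall y, zin y X ->
      exists k s t, is_aut Phi s t /\ zeq y (zact (amap s t) (ys k)).

(* Elements of F^X (functions X -> F in the model), represented by maps
   f : Z -> F that are well defined on X (respect extensional equality
   on elements of X) and finitely supported; f and g denote the same
   element of F^X iff they agree on X. *)
Definition agree_on (X : Z) (f g : Z -> F) : Prop :=
  forall y, zin y X -> f y = g y.

Definition well_defined_on (X : Z) (f : Z -> F) : Prop :=
  forall y y', zin y X -> zeq y y' -> f y = f y'.

Definition fun_supports (X : Z) (A0 : list atom) (f : Z -> F) : Prop :=
  forall s t, is_aut Phi s t -> fixes s t A0 ->
    forall y, zin y X -> f (zact (amap s t) y) = f y.

Definition in_FX (X : Z) (f : Z -> F) : Prop :=
  well_defined_on X f /\ exists A0, fun_supports X A0 f.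

(* A set B of elements of F^X (given by a predicate, closed under
   agreement on X) that belongs to the model and is a basis. *)
Definition is_basis_in_model (X : Z) (B : (Z -> F) -> Prop) : Prop :=
  (forall f, B f -> in_FX X f) /\
  (forall f g, B f -> in_FX X g -> agree_on X f g -> B g) /\
  (exists A0 : list atom, forall s t, is_aut Phi s t -> fixes s t A0 ->
     (forall f, B f -> exists g, B g /\ forall y, zin y X -> g (zact (amap s t) y) = f y) /\
     (forall g, B g -> exists f, B f /\ forall y, zin y X -> g (zact (amap s t) y) = f y)) /\
  (forall (n : nat) (fs : 'I_n -> Z -> F) (c : 'I_n -> F),
     (forall i, B (fs i)) ->
     (forall i j, i != j -> ~ agree_on X (fs i) (fs j)) ->
     (forall y, zin y X -> \sum_(i < n) c i * fs i y = 0) ->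
     forall i, c i = 0) /\
  (forall g, in_FX X g ->
     exists (n : nat) (fs : 'I_n -> Z -> F) (c : 'I_n -> F),
       (forall i, B (fs i)) /\
       forall y, zin y X -> g y = \sum_(i < n) c i * fs i y).

Definition FX_has_basis (X : Z) : Prop :=
  exists B : (Z -> F) -> Prop, is_basis_in_model X B.

End Model.

(* Main.v *)
Require Import Defs.
From mathcomp Require Import all_boot all_algebra.
From Stdlib Require Import ClassicalEpsilon.
From mathcomp Require Import ring.
Set Implicit Arguments. Unset Strict Implicit. Unset Printing Implicit Defensive.
Import GRing.Theory.
Local Open Scope ring_scope.

Section LinAlg.
Variable F : fieldType.

Definition ext (T : Type) k (v : 'I_k -> T) (x : T) : 'I_k.+1 -> T :=
  fun i => if unlift ord_max i is Some j then v j else x.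

Lemma ext_lift T k (v : 'I_k -> T) x j : ext v x (lift ord_max j) = v j.
Proof. by rewrite /ext liftK. Qed.
Lemma ext_max T k (v : 'I_k -> T) x : ext v x ord_max = x.
Proof. by rewrite /ext unlift_none. Qed.

Lemma sum_ext (W : lmodType F) k (c : 'I_k.+1 -> F) (v : 'I_k -> W) x :
  \sum_(i < k.+1) c i *: ext v x i =
  \sum_(i < k) c (lift ord_max i) *: v i + c ord_max *: x.
Proof.
rewrite big_ord_recr /= ext_max; congr (_ + _); apply: eq_bigr => i _.
have -> : widen_ord (leqnSn k) i = lift ord_max i by apply: val_inj; rewrite /= /bump leqNgt ltn_ord add0n.
by rewrite ext_lift.
Qed.

Lemma indep_ext (W : lmodType F) k (v : 'I_k -> W) x :
  lin_indep_fin v -> (forall c : 'I_k -> F, x <> \sum_(i < k) c i *: v i) ->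
  lin_indep_fin (ext v x).
Proof.
move=> hv hx c; rewrite sum_ext => hs.
have cm : c ord_max = 0.
  apply/eqP; apply/negP => /negP cn; apply: (hx (fun i => - (c (lift ord_max i)) / c ord_max)).
  apply: (@scalerI _ _ (c ord_max)) => //.
  have -> : c ord_max *: x = - \sum_(i < k) c (lift ord_max i) *: v i.
    by apply/eqP; rewrite -addr_eq0 addrC hs.
  rewrite scaler_sumr -sumrN; apply: eq_bigr => i _.
  by rewrite scalerA mulrC divfK // scaleNr.
move: hs; rewrite cm scale0r addr0 => /hv h i.
by case: (unliftP ord_max i) => [j ->|->] //; apply: h.
Qed.

Lemma indep0 (W : lmodType F) (v : 'I_0 -> W) : lin_indep_fin v.
Proof. by move=> c _ []. Qed.

End LinAlg.

Section Span.
Variable F : finFieldType.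
Variable W : lmodType F.

Definition spanL k (v : 'I_k -> W) : seq W :=
  [seq \sum_(i < k) (f : {ffun 'I_k -> F}) i *: v i | f <- enum {ffun 'I_k -> F}].

Lemma notin_spanL k (v : 'I_k -> W) x :
  x \notin spanL v -> forall c : 'I_k -> F, x <> \sum_(i < k) c i *: v i.
Proof.
move=> hx c e; move/negP: hx; apply; rewrite e.
apply/mapP; exists [ffun i => c i]; first by rewrite mem_enum.
by apply: eq_bigr => i _; rewrite ffunE.
Qed.

Lemma pad (e : nat -> W) n M (c : 'I_n -> F) : (n <= M)%N ->
  exists c' : 'I_M -> F, \sum_(i < n) c i *: e i = \sum_(i < M) c' i *: e i.
Proof.
move=> hn.
pose cn (j : nat) : F := if (j < n)%N =P true is ReflectT h then c (Ordinal h) else 0.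
exists (fun i : 'I_M => cn i).
have -> : \sum_(i < n) c i *: e i = \sum_(i < n) cn i *: e i.
  apply: eq_bigr => i _; rewrite /cn; case: eqP => [h|]; last by rewrite ltn_ord.
  by congr (c _ *: _); apply: val_inj.
rewrite (big_ord_widen M (fun j => cn j *: e j) hn) big_mkcond /=.
apply: eq_bigr => i _; case: ifP => // hi.
by rewrite /cn; case: eqP => [h|]; [rewrite h in hi | rewrite scale0r].
Qed.

Lemma coverL (e : nat -> W) :
  (forall w : W, exists (n : nat) (c : 'I_n -> F), w = \sum_(i < n) c i *: e i) ->
  forall L : list W, exists M, forall v, List.In v L ->
    exists c : 'I_M -> F, v = \sum_(i < M) c i *: e i.
Proof.
move=> hsp; elim=> [|a L [M hM]]; first by exists 0%N.
have [n [c hc]] := hsp a.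
exists (maxn n M) => v [<-|hv].
  rewrite hc; have [c' ->] := pad e c (leq_maxl n M); by exists c'.
have [c1 ->] := hM v hv; have [c' ->] := pad e c1 (leq_maxr n M); by exists c'.
Qed.

End Span.

Section Geo.
Variable F : fieldType.
Variables (V Vs : lmodType F) (Phi : V -> Vs -> F).
Hypothesis hbil : bilinear_form Phi.

Lemma Phi0l w : Phi 0 w = 0.
Proof. by have := hbil.1 (-1) 0 0 w; rewrite scaler0 addr0 mulN1r addNr => ->. Qed.
Lemma PhiDl v1 v2 w : Phi (v1 + v2) w = Phi v1 w + Phi v2 w.
Proof. by have := hbil.1 1 v1 v2 w; rewrite scale1r mul1r. Qed.
Lemma PhiZl a v w : Phi (a *: v) w = a * Phi v w.
Proof. by have := hbil.1 a v 0 w; rewrite addr0 Phi0l addr0. Qed.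
Lemma PhiNl v w : Phi (- v) w = - Phi v w.
Proof. by rewrite -scaleN1r PhiZl mulN1r. Qed.
Lemma PhiBl v1 v2 w : Phi (v1 - v2) w = Phi v1 w - Phi v2 w.
Proof. by rewrite PhiDl PhiNl. Qed.
Lemma Phi0r v : Phi v 0 = 0.
Proof. by have := hbil.2 (-1) v 0 0; rewrite scaler0 addr0 mulN1r addNr => ->. Qed.
Lemma PhiDr v w1 w2 : Phi v (w1 + w2) = Phi v w1 + Phi v w2.
Proof. by have := hbil.2 1 v w1 w2; rewrite scale1r mul1r. Qed.
Lemma PhiZr a v w : Phi v (a *: w) = a * Phi v w.
Proof. by have := hbil.2 a v w 0; rewrite addr0 Phi0r addr0. Qed.
Lemma PhiNr v w : Phi v (- w) = - Phi v w.
Proof. by rewrite -scaleN1r PhiZr mulN1r. Qed.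
Lemma PhiBr v w1 w2 : Phi v (w1 - w2) = Phi v w1 - Phi v w2.
Proof. by rewrite PhiDr PhiNr. Qed.

Lemma Phi_suml k (c : 'I_k -> F) (e : 'I_k -> V) w :
  Phi (\sum_(i < k) c i *: e i) w = \sum_(i < k) c i * Phi (e i) w.
Proof.
elim/big_rec2: _ => [|i y1 y2 _ <-]; first exact: Phi0l.
by rewrite PhiDl PhiZl.
Qed.
Lemma Phi_sumr k (c : 'I_k -> F) (e : 'I_k -> Vs) v :
  Phi v (\sum_(i < k) c i *: e i) = \sum_(i < k) c i * Phi v (e i).
Proof.
elim/big_rec2: _ => [|i y1 y2 _ <-]; first exact: Phi0r.
by rewrite PhiDr PhiZr.
Qed.

Definition tvs (x : Vs) (u : V) (v : V) : V := v + Phi v x *: u.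
Definition tvt (x : Vs) (u : V) (w : Vs) : Vs := w - Phi u w *: x.

Lemma tv_aut x u : Phi u x = 0 -> is_aut Phi (tvs x u) (tvt x u).
Proof.
move=> hux; split.
- exists (tvs (- x) u) => v; rewrite /tvs ?PhiNr ?PhiDl ?PhiZl ?PhiNr ?hux ?oppr0 ?mulr0 ?addr0 ?scaleNr.
    by rewrite addrK.
  by rewrite subrK.
- exists (fun w => w + Phi u w *: x) => w; rewrite /tvt ?PhiDr ?PhiBr ?PhiNr ?PhiZr ?hux ?mulr0 ?oppr0 ?addr0 ?subr0.
    by rewrite subrK.
  by rewrite addrK.
- split=> [a b|a b]; rewrite /tvs.
    by rewrite PhiDl scalerDl addrACA.
  by rewrite PhiZl scalerDr scalerA.
- split=> [a b|a b]; rewrite /tvt.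
    by rewrite PhiDr scalerDl opprD addrACA.
  by rewrite PhiZr scalerBr scalerA.
- move=> v w; rewrite /tvs /tvt PhiDl !PhiBr !PhiZl !PhiZr hux.
  rewrite mulr0 mulr0 subr0; ring.
Qed.

Lemma tv_fixes x u (E : list (atom V Vs)) :
  (forall v, List.In (inl v) E -> Phi v x = 0) ->
  (forall a, List.In (inr a) E -> Phi u a = 0) ->
  fixes (tvs x u) (tvt x u) E.
Proof.
move=> h1 h2 [v|a] hin /=; congr (_ _).
  by rewrite /tvs h1 // scale0r addr0.
by rewrite /tvt h2 // scale0r subr0.
Qed.

End Geo.

Section Alg.
Variable F : fieldType.
Variables (V Vs : lmodType F).
Notation Z := (zfa (atom V Vs)).

Definition ev (h : Z -> F) (v : V) : F := h (Atm (inl v)).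
Definition ag (f g : Z -> F) : Prop := forall v, ev f v = ev g v.
Definition agb (f g : Z -> F) : bool :=
  if excluded_middle_informative (ag f g) then true else false.

Lemma agbP f g : reflect (ag f g) (agb f g).
Proof. by rewrite /agb; case: excluded_middle_informative => h; constructor. Qed.

Lemma ag_refl f : ag f f. Proof. by []. Qed.
Lemma ag_sym f g : ag f g -> ag g f. Proof. by move=> h v; rewrite h. Qed.
Lemma ag_trans f g h : ag f g -> ag g h -> ag f h.
Proof. by move=> h1 h2 v; rewrite h1 h2. Qed.

Definition catf (A : Type) N M (f : 'I_N -> A) (f' : 'I_M -> A) : 'I_(N + M) -> A :=
  fun l => match split l with inl i => f i | inr j => f' j end.
Lemma catf_l A N M (f : 'I_N -> A) (f' : 'I_M -> A) i : catf f f' (lshift M i) = f i.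
Proof. by rewrite /catf (unsplitK (inl _ i) : split (lshift M i) = inl i). Qed.
Lemma catf_r A N M (f : 'I_N -> A) (f' : 'I_M -> A) j : catf f f' (rshift N j) = f' j.
Proof. by rewrite /catf (unsplitK (inr _ j) : split (rshift N j) = inr j). Qed.

Definition Cf (b : Z -> F) N (d : 'I_N -> F) (g : 'I_N -> Z -> F) : F :=
  \sum_(i < N | agb (g i) b) d i.

Lemma Cf_ag b b' N (d : 'I_N -> F) g : ag b b' -> Cf b d g = Cf b' d g.
Proof.
move=> hb; apply: eq_bigl => i; apply/agbP/agbP => h.
  exact: ag_trans h hb.
exact: ag_trans h (ag_sym hb).
Qed.

Lemma Cf_cat b N M (d : 'I_N -> F) (d' : 'I_M -> F) g g' :
  Cf b (catf d d') (catf g g') = Cf b d g + Cf b d' g'.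
Proof.
rewrite /Cf big_split_ord /=; congr (_ + _); apply: eq_big => i;
  by rewrite ?catf_l ?catf_r.
Qed.

Lemma sum_cat N M (d : 'I_N -> F) (d' : 'I_M -> F) g g' v :
  \sum_(l < N + M) catf d d' l * ev (catf g g' l) v =
  \sum_(i < N) d i * ev (g i) v + \sum_(j < M) d' j * ev (g' j) v.
Proof.
rewrite big_split_ord /=; congr (_ + _); apply: eq_bigr => i _;
  by rewrite ?catf_l ?catf_r.
Qed.

Lemma Cf_single m (e : 'I_m -> F) h k :
  (forall k l, k != l -> ~ ag (h k) (h l)) -> Cf (h k) e h = e k.
Proof.
move=> hd; rewrite /Cf (big_pred1 k) // => i /=.
case: (eqVneq i k) => [->|ne]; first by apply/agbP.
by apply/agbP => /(hd _ _ ne).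
Qed.

Lemma Cf0 b N (d : 'I_N -> F) g : Cf b d g != 0 -> exists i, ag (g i) b.
Proof.
move=> h; apply: NNPP => hn; move/eqP: h; apply; apply: big_pred0 => i.
by apply/agbP => hi; apply: hn; exists i.
Qed.

Definition firstb N (g : 'I_N -> Z -> F) (i : 'I_N) : bool :=
  [forall k : 'I_N, (k < i)%N ==> ~~ agb (g k) (g i)].

Lemma classrep N (g : 'I_N -> Z -> F) j :
  exists i0, forall i, (firstb g i && agb (g j) (g i)) = (i == i0).
Proof.
have Pj : agb (g j) (g j) by apply/agbP.
case: (@arg_minnP _ j (fun i => agb (g j) (g i)) (fun i => nat_of_ord i) Pj) => i0 hi0 hmin.
exists i0 => i; apply/idP/eqP.
  case/andP => /forallP hf hi; apply: val_inj; apply/eqP; rewrite eqn_leq hmin // andbT.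
  rewrite leqNgt; apply/negP => lt; move: (hf i0); rewrite lt /= => /negP; apply.
  by apply/agbP; apply: ag_trans (ag_sym (agbP _ _ hi0)) (agbP _ _ hi).
move=> ->; rewrite hi0 andbT; apply/forallP => k; apply/implyP => lt; apply/negP => /agbP hk.
have : (i0 <= k)%N by apply: hmin; apply/agbP; exact: ag_trans (agbP _ _ hi0) (ag_sym hk).
by rewrite leqNgt lt.
Qed.

Variable B : (Z -> F) -> Prop.
Hypothesis hLI : forall n (fs : 'I_n -> Z -> F) (c : 'I_n -> F),
  (forall i, B (fs i)) -> (forall i j, i != j -> ~ ag (fs i) (fs j)) ->
  (forall v, \sum_(i < n) c i * ev (fs i) v = 0) -> forall i, c i = 0.

Lemma norm N (d : 'I_N -> F) g : (forall i, B (g i)) ->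
  exists m (e : 'I_m -> F) (h : 'I_m -> Z -> F),
  [/\ (forall k, B (h k)), (forall k l, k != l -> ~ ag (h k) (h l)),
      (forall k, e k != 0),
      (forall v, \sum_(k < m) e k * ev (h k) v = \sum_(i < N) d i * ev (g i) v) &
      (forall b, Cf b d g != 0 -> exists k, ag (h k) b)].
Proof.
move=> hB.
pose S := [set i | firstb g i && (Cf (g i) d g != 0)].
exists #|S|, (fun k => Cf (g (enum_val k)) d g), (fun k => g (enum_val k)).
split.
- by move=> k.
- move=> k l kl hag.
  have ne : enum_val k != enum_val l :> 'I_N.
    by apply/negP => /eqP /enum_val_inj e; rewrite e eqxx in kl.
  have := enum_valP k; rewrite inE => /andP [/forallP fk _].
  have := enum_valP l; rewrite inE => /andP [/forallP fl _].
  case: (ltngtP (enum_val k) (enum_val l)) => [lt|lt|/val_inj e]; last by rewrite e eqxx in ne.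
    by move: (fl (enum_val k)); rewrite lt /= => /negP; apply; apply/agbP.
  by move: (fk (enum_val l)); rewrite lt /= => /negP; apply; apply/agbP; apply: ag_sym.
- by move=> k; have := enum_valP k; rewrite inE => /andP [].
- move=> v.
  rewrite -(big_enum_val (fun i => Cf (g i) d g * ev (g i) v)).
  transitivity (\sum_(i < N | firstb g i) Cf (g i) d g * ev (g i) v).
    rewrite [LHS]big_mkcond [RHS]big_mkcond; apply: eq_bigr => i _.
    rewrite inE; case: (firstb g i) => //=; case: eqP => // ->; by rewrite mul0r.
  transitivity (\sum_(i < N) \sum_(j < N)
     (if firstb g i && agb (g j) (g i) then d j * ev (g j) v else 0)).
    rewrite big_mkcond; apply: eq_bigr => i _; case: (firstb g i) => /=.
      rewrite /Cf big_distrl big_mkcond; apply: eq_bigr => j _.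
      by case: agbP => // h; rewrite h.
    by rewrite big1.
  rewrite exchange_big; apply: eq_bigr => j _.
  have [i0 hi0] := classrep g j.
  rewrite (eq_bigr (fun i => if i == i0 then d j * ev (g j) v else 0)); last first.
    by move=> i _; rewrite hi0.
  by rewrite -big_mkcond big_pred1_eq.
- move=> b hb; have [j hj] := Cf0 hb.
  have [i0 hi0] := classrep g j.
  have /andP [f0 a0] : firstb g i0 && agb (g j) (g i0) by rewrite hi0.
  have ag0 : ag (g i0) b by apply: ag_trans (ag_sym (agbP _ _ a0)) hj.
  have hin : i0 \in S by rewrite inE f0 /= (Cf_ag _ _ ag0).
  by exists (enum_rank_in hin i0); rewrite enum_rankK_in.
Qed.

Lemma LIp N (d : 'I_N -> F) g : (forall i, B (g i)) ->
  (forall v, \sum_(i < N) d i * ev (g i) v = 0) -> forall b, Cf b d g = 0.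
Proof.
move=> hB hs b; have [m [e [h [hBh hd he hsum hc]]]] := norm d hB.
case: (eqVneq (Cf b d g) 0) => // /hc [k _].
have := hLI hBh hd (fun v => etrans (hsum v) (hs v)) k.
by move/eqP; rewrite (negbTE (he k)).
Qed.

Lemma Cf_uniq N M (d : 'I_N -> F) (e : 'I_M -> F) g h :
  (forall i, B (g i)) -> (forall j, B (h j)) ->
  (forall v, \sum_(i < N) d i * ev (g i) v = \sum_(j < M) e j * ev (h j) v) ->
  forall b, Cf b d g = Cf b e h.
Proof.
move=> hg hh hs b.
have hB : forall l, B (catf g h l) by move=> l; rewrite /catf; case: split.
have hs0 : forall v, \sum_(l < N + M) catf d (fun j => - e j) l * ev (catf g h l) v = 0.
  move=> v; rewrite sum_cat hs -big_split /=; apply: big1 => j _.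
  by rewrite mulNr addrN.
have H := LIp hB hs0 b.
have HN : Cf b (fun j => - e j) h = - Cf b e h by rewrite /Cf sumrN.
by move: H; rewrite Cf_cat HN => /eqP; rewrite subr_eq0 => /eqP.
Qed.

Lemma LB N (d : 'I_N -> F) g m (bb : 'I_m -> Z -> F) :
  (forall l1 l2, l1 != l2 -> ~ ag (bb l1) (bb l2)) ->
  (forall l, Cf (bb l) d g != 0) -> (m <= N)%N.
Proof.
move=> hd hc.
have [phi hphi] : exists phi : 'I_m -> 'I_N, forall l, ag (g (phi l)) (bb l).
  exact: (@fin_all_exists _ (fun _ => 'I_N) (fun l i => ag (g i) (bb l)) (fun l => Cf0 (hc l))).
have inj : injective phi.
  move=> l1 l2 e; case: (eqVneq l1 l2) => // ne; exfalso; apply: (hd _ _ ne).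
  by apply: ag_trans (ag_sym (hphi l1)) _; rewrite e; apply: hphi.
by have := leq_card phi inj; rewrite !card_ord.
Qed.

End Alg.

Section Model2.
Variable F : finFieldType.
Variables (V Vs : lmodType F) (Phi : V -> Vs -> F).
Hypothesis hbil : bilinear_form Phi.
Notation Z := (zfa (atom V Vs)).

Definition X : Z := Cls (fun v : V => Atm (inl v)).
Definition fw (w : Vs) : Z -> F :=
  fun y => match y with Atm (inl v) => Phi v w | _ => 0 end.

Lemma zinX y : zin y X -> exists v, y = Atm (inl v).
Proof. by case: y => [a|Ix f] /= [v h] //; exists v; rewrite h. Qed.
Lemma zinX' v : zin (Atm (inl v)) X.
Proof. by exists v. Qed.

Lemma surj_of_bij (T : Type) (s : T -> T) : bijective s -> forall v, exists v0, s v0 = v.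
Proof. by case=> g _ h v; exists (g v); rewrite h. Qed.

Lemma catf_distinct N M (f : 'I_N -> Z -> F) (f' : 'I_M -> Z -> F) :
  (forall k l, k != l -> ~ ag (f k) (f l)) ->
  (forall k l, k != l -> ~ ag (f' k) (f' l)) ->
  (forall k l, ~ ag (f k) (f' l)) ->
  forall k l, k != l -> ~ ag (catf f f' k) (catf f f' l).
Proof.
move=> h1 h2 h3 k l; case: (split_ordP k) => k' ->; case: (split_ordP l) => l' ->;
  rewrite ?catf_l ?catf_r => ne.
- by apply: h1; apply: contraNneq ne => ->.
- exact: h3.
- by move=> h; apply: (h3 l' k'); apply: ag_sym.
- by apply: h2; apply: contraNneq ne => ->.
Qed.

Lemma Cf_transport s (b : Z -> F) N (e : 'I_N -> F) g g' :
  (forall v, exists v0, s v0 = v) ->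
  (forall i v, ev (g' i) v = ev (g i) (s v)) ->
  (forall v, ev b (s v) = ev b v) -> Cf b e g' = Cf b e g.
Proof.
move=> hs hg hb; apply: eq_bigl => i; apply/agbP/agbP => h v.
  by have [v0 <-] := hs v; rewrite -hg h hb.
by rewrite hg h hb.
Qed.

Lemma distinct_transport s N (g g' : 'I_N -> Z -> F) :
  (forall v, exists v0, s v0 = v) ->
  (forall i v, ev (g' i) v = ev (g i) (s v)) ->
  (forall k l, k != l -> ~ ag (g k) (g l)) ->
  (forall k l, k != l -> ~ ag (g' k) (g' l)).
Proof.
move=> hs hg hd k l ne h; apply: (hd _ _ ne) => v.
by have [v0 <-] := hs v; rewrite -!hg h.
Qed.

Lemma inFX_fw w : in_FX Phi X (fw w).
Proof.
split.
  move=> y y' /zinX [v ->]; case: y' => [a|Ix f] //= <-; by [].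
exists [:: inr w] => s t [_ _ _ _ hP] hf y /zinX [v ->] /=.
have : amap s t (inr w) = inr w by apply: hf; left.
by case=> e; rewrite /= -{1}e hP.
Qed.

End Model2.
Arguments zinX' {F V Vs} v.

Section Main.
Variable F : finFieldType.
Variables (V Vs : lmodType F) (Phi : V -> Vs -> F).
Hypothesis hbil : bilinear_form Phi.
Hypothesis hsea : space_extension_axiom Phi.
Variables (eV : nat -> V) (eS : nat -> Vs).
Hypothesis heV : aleph0_basis eV.
Hypothesis heS : aleph0_basis eS.
Notation Z := (zfa (atom V Vs)).
Notation atm := (atom V Vs).

Fixpoint EVof (E : list atm) : list V :=
  match E with nil => nil | a :: E' =>
    match a with inl v => v :: EVof E' | inr _ => EVof E' end end.
Fixpoint ESof (E : list atm) : list Vs :=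
  match E with nil => nil | a :: E' =>
    match a with inl _ => ESof E' | inr w => w :: ESof E' end end.
Lemma EVof_in v E : List.In (inl v) E -> List.In v (EVof E).
Proof. elim: E => //= a E IH [->|h]; first by left. case: a {h} (IH h) => //= ? ?; by right. Qed.
Lemma ESof_in w E : List.In (inr w) E -> List.In w (ESof E).
Proof. elim: E => //= a E IH [->|h]; first by left. case: a {h} (IH h) => //= ? ?; by right. Qed.

Lemma coverV (E : list atm) : exists M, forall v, List.In (inl v) E ->
  exists c : 'I_M -> F, v = \sum_(i < M) c i *: eV i.
Proof.
have [M hM] := coverL heV.2 (EVof E); exists M => v /EVof_in; exact: hM.
Qed.
Lemma coverS (E : list atm) : exists M, forall w, List.In (inr w) E ->
  exists c : 'I_M -> F, w = \sum_(i < M) c i *: eS i.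
Proof.
have [M hM] := coverL heS.2 (ESof E); exists M => v /ESof_in; exact: hM.
Qed.

Lemma indV M : lin_indep_fin (fun i : 'I_M => eV i).
Proof. move=> c; exact: heV.1. Qed.
Lemma indS M : lin_indep_fin (fun i : 'I_M => eS i).
Proof. move=> c; exact: heS.1. Qed.

Lemma sea2_pair N z1 z2 (r1 r2 : F) :
  (forall c : 'I_N -> F, z1 <> \sum_(i < N) c i *: eS i) ->
  (forall c : 'I_N.+1 -> F, z2 <> \sum_(i < N.+1) c i *: ext (fun i : 'I_N => eS i) z1 i) ->
  exists u, [/\ forall j : 'I_N, Phi u (eS j) = 0, Phi u z1 = r1 & Phi u z2 = r2].
Proof.
move=> h1 h2.
have hi := indep_ext (indep_ext (@indS N) h1) h2.
have [u [_ hu]] := hsea.2 _ _ (ext (ext (fun _ : 'I_N => 0) r1) r2) [::] hi.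
exists u; split.
- by move=> j; have := hu (lift ord_max (lift ord_max j)); rewrite !ext_lift.
- by have := hu (lift ord_max ord_max); rewrite !ext_lift !ext_max.
- by have := hu ord_max; rewrite !ext_max.
Qed.

Lemma zeroV (E : list atm) M w :
  (forall v, List.In (inl v) E -> exists c : 'I_M -> F, v = \sum_(i < M) c i *: eV i) ->
  (forall i : 'I_M, Phi (eV i) w = 0) -> forall v, List.In (inl v) E -> Phi v w = 0.
Proof.
move=> hM h v /hM [c ->]; rewrite Phi_suml //; apply: big1 => i _; by rewrite h mulr0.
Qed.
Lemma zeroS (E : list atm) N u :
  (forall w, List.In (inr w) E -> exists c : 'I_N -> F, w = \sum_(i < N) c i *: eS i) ->
  (forall i : 'I_N, Phi u (eS i) = 0) -> forall w, List.In (inr w) E -> Phi u w = 0.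
Proof.
move=> hM h w /hM [c ->]; rewrite Phi_sumr //; apply: big1 => i _; by rewrite h mulr0.
Qed.

Lemma tvconj (E : list atm) N u x :
  (forall w, List.In (inr w) E -> exists c : 'I_N -> F, w = \sum_(i < N) c i *: eS i) ->
  (forall i : 'I_N, Phi u (eS i) = 0) ->
  (forall v, List.In (inl v) E -> Phi v x = 0) -> Phi u x = 0 ->
  is_aut Phi (tvs Phi x u) (tvt Phi x u) /\ fixes (tvs Phi x u) (tvt Phi x u) E.
Proof.
move=> hN hu hx hux; split; first exact: tv_aut.
apply: tv_fixes => //; exact: zeroS hN hu.
Qed.

Lemma memIn (T : eqType) (x : T) (s : seq T) : x \in s -> List.In x s.
Proof. elim: s => //= a s IH; rewrite in_cons => /orP [/eqP ->|h]; [by left|right; exact: IH]. Qed.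

Theorem no_basis : ~ FX_has_basis Phi (@X F V Vs).
Proof.
move=> [B [hBin [hBcl [[A0 hA0] [hLI0 hSp]]]]].
have hLI : forall n (fs : 'I_n -> Z -> F) (c : 'I_n -> F), (forall i, B (fs i)) ->
    (forall i j, i != j -> ~ ag (fs i) (fs j)) ->
    (forall v, \sum_(i < n) c i * ev (fs i) v = 0) -> forall i, c i = 0.
  move=> n fs c hB hd hs; apply: (hLI0 n fs c hB).
  - move=> i j ne hag; apply: (hd i j ne) => v; apply: hag; exact: zinX'.
  - move=> y /zinX [v ->]; exact: hs v.
have hSp' : forall g, in_FX Phi (@X F V Vs) g -> exists n (fs : 'I_n -> Z -> F) (c : 'I_n -> F),
    (forall i, B (fs i)) /\ forall v, ev g v = \sum_(i < n) c i * ev (fs i) v.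
  move=> g hg; have [n [fs [c [hB hr]]]] := hSp g hg; exists n, fs, c; split=> // v.
  by rewrite /ev (hr _ (zinX' v)).
have hsupp : forall s t, is_aut Phi s t -> fixes s t A0 -> forall g, B g ->
    exists f, B f /\ forall v, ev g (s v) = ev f v.
  move=> s t ha hf g hg; have [_ h2] := hA0 s t ha hf; have [f [hf1 hf2]] := h2 g hg.
  by exists f; split=> // v; exact: hf2 _ (zinX' v).
have transport : forall s t, is_aut Phi s t -> fixes s t A0 ->
    forall N (e : 'I_N -> F) (g : 'I_N -> Z -> F) w0 w1, t w0 = w1 -> (forall i, B (g i)) ->
    (forall v, ev (fw Phi w1) v = \sum_(i < N) e i * ev (g i) v) ->
    exists g' : 'I_N -> Z -> F, [/\ forall i, B (g' i),
      forall i v, ev (g' i) v = ev (g i) (s v) &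
      forall v, ev (fw Phi w0) v = \sum_(i < N) e i * ev (g' i) v].
  move=> s t ha hf N e g w0 w1 ht hB hr.
  have [g' hg'] := @fin_all_exists _ (fun _ => Z -> F)
     (fun i f => B f /\ forall v, ev (g i) (s v) = ev f v) (fun i => hsupp s t ha hf _ (hB i)).
  exists g'; split => [i|i v|v]; first by case: (hg' i).
    by case: (hg' i) => _ ->.
  have [_ _ _ _ hP] := ha.
  transitivity (ev (fw Phi w1) (s v)); first by rewrite /ev /= -ht hP.
  by rewrite hr; apply: eq_bigr => i _; case: (hg' i) => _ ->.
have [M0 hM0] := coverV A0; have [N0 hN0] := coverS A0.
have [w [wnot wphi]] := hsea.1 _ _ (fun _ : 'I_M0 => 0) (spanL (fun i : 'I_N0 => eS i)) (@indV M0).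
have wA0 := zeroV hM0 wphi.
have [n0 [fs0 [c0 [hB0 hr0]]]] := hSp' _ (inFX_fw Phi w).
have [n [c [b [hBb hdb hcb hsb _]]]] := norm c0 hB0.
have hrw : forall v, ev (fw Phi w) v = \sum_(k < n) c k * ev (b k) v by move=> v; rewrite hsb hr0.
have [sup hsup] : exists sup : 'I_n -> list atm, forall k s t, is_aut Phi s t ->
    fixes s t (sup k) -> forall v, ev (b k) (s v) = ev (b k) v.
  apply: (@fin_all_exists _ (fun _ => list atm) (fun k L => forall s t, is_aut Phi s t ->
    fixes s t L -> forall v, ev (b k) (s v) = ev (b k) v)) => k.
  have [_ [L hL]] := hBin _ (hBb k); exists L => s t ha hf v; exact: hL s t ha hf _ (zinX' v).
pose E := A0 ++ List.flat_map sup (enum 'I_n).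
have fixE : forall s t, fixes s t E -> fixes s t A0 /\ forall k, fixes s t (sup k).
  move=> s t hf; split => [a ha|k a ha]; apply: hf; apply: List.in_or_app; [by left|right].
  apply/List.in_flat_map; exists k; split => //; apply: memIn; exact: mem_enum.
have A0E : forall a, List.In a A0 -> List.In a E by move=> a ha; apply: List.in_or_app; left.
have [M1 hM1] := coverV E; have [N1 hN1] := coverS E.
have [w' [w'not w'phi]] := hsea.1 _ _ (fun _ : 'I_M1 => 0)
   (spanL (ext (fun i : 'I_N0 => eS i) w) ++ spanL (fun i : 'I_N1 => eS i)) (@indV M1).
move: w'not; rewrite mem_cat negb_or => /andP [w'n1 w'n2].
have w'E := zeroV hM1 w'phi.
have [d [dnot dphi]] := hsea.1 _ _ (fun _ : 'I_M1 => 0)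
   (spanL (ext (fun i : 'I_N1 => eS i) w')) (@indV M1).
have dE := zeroV hM1 dphi.
have [u1 [u1b u1w u1w']] := sea2_pair 1 1 (notin_spanL wnot) (notin_spanL w'n1).
have [u2 [u2b u2w u2w']] := sea2_pair 1 0 (notin_spanL wnot) (notin_spanL w'n1).
have [u3 [u3b u3w' u3d]] := sea2_pair 1 1 (notin_spanL w'n2) (notin_spanL dnot).
have [u4 [u4b u4w' u4d]] := sea2_pair 1 0 (notin_spanL w'n2) (notin_spanL dnot).
have h1x : forall v, List.In (inl v) A0 -> Phi v (w' - w) = 0.
  by move=> v hv; rewrite PhiBr // w'E ?wA0 ?subrr //; exact: A0E.
have h1u : Phi u1 (w' - w) = 0 by rewrite PhiBr // u1w u1w' subrr.
have [a1 f1] := tvconj hN0 u1b h1x h1u.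
have [a2 f2] := tvconj hN0 u2b (fun v hv => w'E _ (A0E _ hv)) u2w'.
have h3x : forall v, List.In (inl v) E -> Phi v (d - w') = 0.
  by move=> v hv; rewrite PhiBr // w'E ?dE ?subrr.
have h3u : Phi u3 (d - w') = 0 by rewrite PhiBr // u3w' u3d subrr.
have [a3 f3] := tvconj hN1 u3b h3x h3u.
have [a4 f4] := tvconj (x := d) hN1 u4b dE u4d.
have t1w : tvt Phi (w' - w) u1 w' = w by rewrite /tvt u1w' scale1r opprB addrC subrK.
have t2w : tvt Phi w' u2 (w + w') = w by rewrite /tvt PhiDr // u2w u2w' addr0 scale1r addrK.
have t3d : tvt Phi (d - w') u3 d = w' by rewrite /tvt u3d scale1r opprB addrC subrK.
have t4d : tvt Phi d u4 (w' + d) = w' by rewrite /tvt PhiDr // u4w' u4d addr0 scale1r addrK.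
have [b1 [hB1 hb1 hr1]] := transport _ _ a1 f1 _ c b w' w t1w hBb hrw.
have [b2 [hB2 hb2 hr2]] := transport _ _ a2 f2 _ c b (w + w') w t2w hBb hrw.
have [b3 [hB3 hb3 hr3]] := transport _ _ a3 (fixE _ _ f3).1 _ c b1 d w' t3d hB1 hr1.
have [b4 [hB4 hb4 hr4]] := transport _ _ a4 (fixE _ _ f4).1 _ c b1 (w' + d) w' t4d hB1 hr1.
have surj : forall s t, is_aut Phi s t -> forall v, exists v0, s v0 = v.
  by move=> s t [bs _ _ _ _]; exact: surj_of_bij.
have hBcat : forall N M (g : 'I_N -> Z -> F) (g' : 'I_M -> Z -> F),
    (forall i, B (g i)) -> (forall i, B (g' i)) -> forall l, B (catf g g' l).
  by move=> N M g g' h h' l; rewrite /catf; case: split.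
have L1 : forall k, Cf (b k) c b1 = 0.
  move=> k.
  have e3 : Cf (b k) c b3 = Cf (b k) c b1.
    exact: Cf_transport (surj _ _ a3) hb3 (hsup k _ _ a3 ((fixE _ _ f3).2 k)).
  have e4 : Cf (b k) c b4 = Cf (b k) c b1.
    exact: Cf_transport (surj _ _ a4) hb4 (hsup k _ _ a4 ((fixE _ _ f4).2 k)).
  have ecat : Cf (b k) c b4 = Cf (b k) (catf c c) (catf b1 b3).
    have hs4 : forall v, \sum_(i < n) c i * ev (b4 i) v =
        \sum_(l < n + n) catf c c l * ev (catf b1 b3 l) v.
      by move=> v; rewrite -hr4 sum_cat -hr1 -hr3 /ev /= PhiDr.
    by have := Cf_uniq hLI hB4 (hBcat _ _ _ _ hB1 hB3) hs4 (b k).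
  move: ecat; rewrite Cf_cat e3 e4 => h.
  by apply: (@addrI _ (Cf (b k) c b1)); rewrite addr0 -h.
have hdb1 := distinct_transport (surj _ _ a1) hb1 hdb.
have cross : forall k j, ~ ag (b k) (b1 j).
  move=> k j h; have := L1 k; rewrite (Cf_ag c b1 h) (Cf_single c j hdb1).
  by move/eqP; rewrite (negbTE (hcb j)).
have hbbd := catf_distinct hdb hdb1 cross.
have hbbc : forall l, Cf (catf b b1 l) (catf c c) (catf b b1) != 0.
  move=> l; rewrite Cf_cat; case: (split_ordP l) => j ->; rewrite ?catf_l ?catf_r.
    rewrite (Cf_single c j hdb) L1 addr0; exact: hcb.
  rewrite (Cf_single c j hdb1).
  case: (eqVneq (Cf (b1 j) c b) 0) => [->|/Cf0 [k hk]]; last by exfalso; exact: cross k j hk.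
  by rewrite add0r; exact: hcb.
have hbbc2 : forall l, Cf (catf b b1 l) c b2 != 0.
  have hs2 : forall v, \sum_(i < n) c i * ev (b2 i) v =
      \sum_(l < n + n) catf c c l * ev (catf b b1 l) v.
    by move=> v; rewrite -hr2 sum_cat -hrw -hr1 /ev /= PhiDr.
  move=> l; rewrite (Cf_uniq hLI hB2 (hBcat _ _ _ _ hBb hB1) hs2); exact: hbbc.
have := LB hbbd hbbc2; rewrite -{3}[n]addn0 leq_add2l leqn0 => /eqP hn0.
have := hrw u1; rewrite /ev /= u1w big1 => [|k _]; first by move/eqP; rewrite oner_eq0.
by exfalso; have : (k < 0)%N by rewrite -[X in (_ < X)%N]hn0 ltn_ord.
Qed.

End Main.

Section Fin.
Variable F : finFieldType.
Variables (V Vs : lmodType F) (Phi : V -> Vs -> F).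
Hypothesis hbil : bilinear_form Phi.
Hypothesis hsea : space_extension_axiom Phi.

Lemma supX : supports Phi [::] (@X F V Vs).
Proof.
move=> s t [[g gs sg] _ _ _ _] _ /=; split => [i|j].
  by exists (s i).
by exists (g j); rewrite /= sg.
Qed.

Lemma id_aut : is_aut Phi id id.
Proof. by split; [exists id|exists id|split|split|]. Qed.

Lemma defX (eV : nat -> V) : aleph0_basis eV -> definable Phi (@X F V Vs).
Proof.
move=> heV; split; first exact: supX.
pose e := eV 0%N.
have e0 : e != 0.
  apply/eqP => h; have := heV.1 1%N (fun _ => 1); rewrite big_ord1 scale1r => /(_ h ord0).
  by move/eqP; rewrite oner_eq0.
exists #|{: F}|, (fun k => Atm (inl (enum_val k *: e))); split.
  by move=> k; exists (enum_val k *: e).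
move=> y /zinX [v ->].
case: (classic (exists c : F, v = c *: e)) => [[c hc]|hn].
  exists (enum_rank c), id, id; split; first exact: id_aut.
  by rewrite /= enum_rankK hc.
pose v0 := fun _ : 'I_0 => e.
have h1 : forall c : 'I_0 -> F, e <> \sum_(i < 0) c i *: v0 i.
  by move=> c; rewrite big_ord0; apply/eqP.
have h2 : forall c : 'I_1 -> F, v <> \sum_(i < 1) c i *: ext v0 e i.
  move=> c hv; apply: hn; exists (c ord0); rewrite hv big_ord1; congr (_ *: _).
  by rewrite /ext; case: unliftP => [[]|].
have hi := indep_ext (indep_ext (@indep0 _ _ v0) h1) h2.
have [x0 [_ hx]] := hsea.1 _ _ (ext (ext (fun _ : 'I_0 => 0) 1) 1) [::] hi.
have hex : Phi e x0 = 1 by have := hx (lift ord_max ord_max); rewrite !ext_lift !ext_max.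
have hvx : Phi v x0 = 1 by have := hx ord_max; rewrite !ext_max.
have hux : Phi (v - e) x0 = 0 by rewrite PhiBl // hex hvx subrr.
exists (enum_rank (1 : F)), (tvs Phi x0 (v - e)), (tvt Phi x0 (v - e)); split.
  exact: tv_aut.
by rewrite /= enum_rankK scale1r /tvs hex scale1r addrC subrK.
Qed.

End Fin.

Theorem mainTheorem14 :
  forall (p : nat), prime p ->
  forall (V Vs : lmodType 'F_p) (Phi : V -> Vs -> 'F_p),
    aleph0_dim V -> aleph0_dim Vs ->
    bilinear_form Phi -> space_extension_axiom Phi ->
    exists X : zfa (atom V Vs),
      [/\ is_set X, in_model Phi X, definable Phi X & ~ FX_has_basis Phi X].
Proof.
move=> p pp V Vs Phi [eV heV] [eS heS] hbil hsea.
exists (@X _ V Vs); split.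
- by [].
- by split; [exists [::]; exact: supX|].
- exact: defX heV.
- have := no_basis hbil hsea heV heS. exact.
Qed.
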